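(* Let $K$ be a finite field of characteristic $p$ and let $d$ be an integer with $\gcd(d,|K|-1)=1$. Let $E$ be the extension of $\mathbb{Q}$ generated by all values $W_{K,d}(a)$, $a\in K^\times$. Let $m$ be the smallest positive divisor of $p-1$ such that $d\equiv 1\pmod{(p-1)/m}$. Then $E$ is the unique subfield of $\mathbb{Q}(\zeta_p)$ with $[E:\mathbb{Q}]=m$.
   Context: $\zeta_p$ is a primitive $p$th root of unity over $\mathbb{Q}$. $\psi_K(x)=\exp(2\pi i\,\mathrm{Tr}_{K/\mathbb{F}_p}(x)/p)$ and $W_{K,d}(a)=\sum_{x\in K}\psi_K(x^d+ax)$. *)

(* Defs.v *)
From HB Require Import structures.
From mathcomp Require Import all_boot all_order all_algebra all_field.
Set Implicit Arguments. Unset Strict Implicit. Unset Printing Implicit Defensive.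
Import GRing.Theory.
Local Open Scope ring_scope.

(* Absolute trace Tr_{K/F_p}(x) = sum_{i < n} x^(p^i), where n = [K:F_p]. *)
Definition absTrace (K : finFieldType) (p : nat) (x : K) : K :=
  \sum_(i < logn p #|K|) x ^+ (p ^ i).

(* The representative t in {0,..,p-1} of an element of the prime field F_p
   (seen inside K), i.e. t%:R = y; defaults to 0 if y is not in F_p. *)
Definition Fp_rep (K : finFieldType) (p : nat) (y : K) : nat :=
  if [pick t : 'I_p | t%:R == y] is Some t then val t else 0%N.

Definition psiK (K : finFieldType) (p : nat) (L : fieldType) (zeta : L) (x : K) : L :=
  zeta ^+ Fp_rep p (absTrace p x).

Definition WKd (K : finFieldType) (p d : nat) (L : fieldType) (zeta : L) (a : K) : L :=
  \sum_(x : K) psiK p zeta (x ^+ d + a * x).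

Definition Wvalues (K : finFieldType) (p d : nat) (L : fieldType) (zeta : L) : seq L :=
  [seq WKd p d zeta a | a <- enum K & a != 0].

(* Main.v *)
Require Import Defs.
From HB Require Import structures.
From mathcomp Require Import all_boot all_order all_algebra all_fingroup all_solvable all_field.
Import GRing.Theory Num.Theory.
Local Open Scope ring_scope.
Set Implicit Arguments. Unset Strict Implicit.

Lemma natr_eq_modP (R : nzRingType) (p : nat) (hp : p \in [pchar R]) (a b : nat) :
  (a%:R == b%:R :> R) = (a == b %[mod p]).
Proof.
wlog ab : a b / (a <= b)%N.
  move=> IH; case: (leqP a b) => [/IH //|/ltnW ba].
  by rewrite eq_sym IH // eq_sym.
by rewrite [in RHS]eq_sym eqn_mod_dvd // (dvdn_pcharf hp) natrB // subr_eq0.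
Qed.

Section Gal.
Variables (L : fieldExtType rat) (p : nat) (zeta : L).
Hypotheses (pr : prime p) (hzeta : p.-primitive_root zeta) (hL : <<1; zeta>>%VS = fullv).

Let p_gt0 : (0 < p)%N := prime_gt0 pr.

Lemma natr_p_neq0 : (p%:R : L) != 0.
Proof. by rewrite -(rmorph_nat (in_alg L)) fmorph_eq0 pnatr_eq0 -lt0n. Qed.

Lemma zeta_neq1 : zeta != 1.
Proof.
rewrite -{1}(expr1 zeta) -(expr0 zeta) (eq_prim_root_expr hzeta) mod0n modn_small //.
exact: prime_gt1.
Qed.

Lemma splitL : SplittingField.axiom L.
Proof.
exists ('X^p - 1).
  by rewrite rpredB ?rpredX ?polyOverX ?rpred1.
exists [seq zeta ^+ i | i <- index_iota 0 p].
  by rewrite big_map factor_Xn_sub_1 // eqpxx.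
apply/eqP; rewrite eqEsubv subvf -hL /=.
apply/FadjoinP; split; first exact: subv_adjoin_seq.
apply: seqv_sub_adjoin; apply/mapP; exists 1%N; last by rewrite expr1.
by rewrite mem_index_iota prime_gt1.
Qed.

Definition P1 : {poly rat} := \poly_(i < p) 1.

Lemma map_P1 (R : nzRingType) (f : {rmorphism rat -> R}) :
  map_poly f P1 = \poly_(i < p) 1.
Proof.
apply/polyP => i; rewrite coef_map !coef_poly; case: ifP => _.
  exact: rmorph1.
exact: rmorph0.
Qed.

Lemma horner_P1 (R : comNzRingType) (x : R) :
  (\poly_(i < p) 1).[x] = \sum_(i < p) x ^+ i.
Proof. by rewrite horner_poly; apply: eq_bigr => i _; rewrite mul1r. Qed.

Lemma dimL : \dim {:L} = p.-1.
Proof.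
have := adjoin_degreeE 1 zeta; rewrite dimv1 divn1 hL => <-.
have /polyOver1P[q1 Dq1] := minPolyOver 1 zeta.
suff sq1 : size q1 = p.
  by have := size_minPoly 1 zeta; rewrite Dq1 size_map_poly sq1 => ->.
have szP : size P1 = p by rewrite size_poly_eq ?oner_eq0.
have P0 : P1 != 0 by rewrite -size_poly_eq0 szP -lt0n.
have q1P : q1 %| P1.
  rewrite -(dvdp_map (in_alg L)) -Dq1; apply: minPoly_dvdp.
    by apply/polyOver1P; exists P1.
  rewrite map_P1 /root horner_P1; apply/eqP.
  have := subrX1 zeta p; rewrite prim_expr_order // subrr => /esym/eqP.
  by rewrite mulf_eq0 subr_eq0 (negbTE zeta_neq1) => /eqP.
have q10 : q1 != 0 by apply: contraTneq q1P => ->; rewrite dvd0p.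
apply/eqP; rewrite eqn_leq -{1}szP (dvdp_leq P0 q1P) /=.
have szq1 : size (map_poly (ratr : rat -> algC) q1) != 1.
  have h := root_size_gt1 (monic_neq0 (monic_minPoly 1 zeta)) (root_minPoly 1 zeta).
  by rewrite Dq1 size_map_poly in h; rewrite size_map_poly gtn_eqF.
have [w rw] := closed_rootP _ szq1.
have rPw : root (map_poly (ratr : rat -> algC) P1) w.
  by apply: root_dvdp rw; rewrite dvdp_map.
move: rPw; rewrite map_P1 /root horner_P1 => /eqP Sw.
have w1 : w ^+ p = 1.
  by apply/eqP; rewrite -subr_eq0 subrX1 Sw mulr0.
have wn1 : w != 1.
  apply/eqP => w1'; move: Sw; rewrite w1' (eq_bigr (fun _ => 1)) ?sumr_const ?card_ord.
    by move/eqP; rewrite pnatr_eq0; case: p p_gt0.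
  by move=> i _; rewrite expr1n.
have [k primk kp] := prim_order_exists p_gt0 w1.
have kE : k = p.
  apply/eqP; case/primeP: pr => _ /(_ k kp) /orP[/eqP k1|//].
  move: primk; rewrite k1 => /prim_expr_order; rewrite expr1 => w1e.
  by rewrite w1e eqxx in wn1.
rewrite kE in primk.
have [qw [Dqw _] dvqw] := minCpolyP w.
have : qw %| q1 by rewrite -dvqw.
move/(dvdp_leq q10); apply: leq_trans.
have := size_cyclotomic w p; rewrite -(minCpoly_cyclotomic primk) Dqw size_map_poly.
by move=> ->; rewrite totient_prime // prednK.
Qed.

End Gal.
Section GalS.
Variables (S : splittingFieldType rat) (p : nat) (zeta : S).
Hypotheses (pr : prime p) (hzeta : p.-primitive_root zeta) (hL : <<1; zeta>>%VS = fullv).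

Let p_gt0 : (0 < p)%N := prime_gt0 pr.
Implicit Types s t : gal_of {:S}.

Lemma galS_all (x : gal_of {:S}) : x \in 'Gal({:S} / 1)%g.
Proof.
rewrite gal_kHom ?sub1v //; apply/kHom_lrmorphism; split; [exact: rmorphM | exact: rmorph1].
Qed.

Lemma galL : galois 1 {:S}.
Proof.
apply/splitting_galoisField; exists ('X^p - 1); split.
- by rewrite rpredB ?rpredX ?polyOverX ?rpred1.
- exact: separable_Xn_sub_1 (natr_p_neq0 S pr).
exists [seq zeta ^+ i | i <- index_iota 0 p].
  by rewrite big_map factor_Xn_sub_1 // eqpxx.
apply/eqP; rewrite eqEsubv subvf /=.
rewrite -[X in (X <= _)%VS]hL.
apply/FadjoinP; split; first exact: subv_adjoin_seq.
apply: seqv_sub_adjoin; apply/mapP; exists 1%N; last by rewrite expr1.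
by rewrite mem_index_iota prime_gt1.
Qed.

Definition gexp (s : gal_of {:S}) : nat :=
  if [pick i : 'I_p | s zeta == zeta ^+ i] is Some i then val i else 0%N.

Lemma gexpP s : s zeta = zeta ^+ gexp s.
Proof.
rewrite /gexp; case: pickP => [i /eqP //| none].
have : (s zeta) ^+ p = 1 by rewrite -rmorphXn prim_expr_order // rmorph1.
by case/(prim_rootP hzeta) => i Di; have := none i; rewrite Di eqxx.
Qed.

Lemma gal_eq (s t : gal_of {:S}) : s zeta = t zeta -> s = t.
Proof.
move=> Est; apply/eqP/gal_eqP => x _.
have : x \in <<1; zeta>>%VS by rewrite hL memvf.
case/Fadjoin_polyP => q Kq ->.
rewrite -!horner_map !(fixedPoly_gal (sub1v _) (galS_all _) Kq).
exact: (congr1 (horner q) Est).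
Qed.

Lemma gexpM s t : zeta ^+ gexp (s * t)%g = zeta ^+ (gexp s * gexp t).
Proof.
rewrite -gexpP galM ?memvf // (gexpP s).
have -> : t (zeta ^+ gexp s) = (t zeta) ^+ gexp s by rewrite rmorphXn.
by rewrite (gexpP t) -exprM mulnC.
Qed.

Lemma gexpX s j : zeta ^+ gexp (s ^+ j)%g = zeta ^+ (gexp s ^ j).
Proof.
elim: j => [|j IH]; first by rewrite expg0 -gexpP gal_id expn0 expr1.
by rewrite expgSr gexpM exprM IH -exprM expnSr.
Qed.

Lemma gal_eqX s j k : ((s ^+ j)%g == (s ^+ k)%g) = (gexp s ^ j == gexp s ^ k %[mod p]).
Proof.
rewrite -(eq_prim_root_expr hzeta) -!gexpX -!gexpP.
apply/eqP/eqP => [-> // | E]; exact: gal_eq.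
Qed.

Lemma gexp1 s : (s == 1%g) = (gexp s == 1 %[mod p]).
Proof.
by rewrite -(expg1 s) -(expg0 s) gal_eqX !expn1 expn0 !expg1.
Qed.

Lemma galG_cyclic : cyclic 'Gal({:S} / 1)%g.
Proof.
apply: (@field_mul_group_cyclic _ _ _ (fun s => (gexp s)%:R : 'F_p)).
  move=> s t _ _ /=; apply/eqP; rewrite -natrM (natr_eq_modP (pchar_Fp pr)).
  by rewrite -(eq_prim_root_expr hzeta) gexpM.
move=> s _; rewrite -[1 : 'F_p]/(1%:R); split => [/eqP|->].
  by rewrite (natr_eq_modP (pchar_Fp pr)) -gexp1 => /eqP.
by apply/eqP; rewrite (natr_eq_modP (pchar_Fp pr)) -gexp1.
Qed.

Lemma card_galG : #|'Gal({:S} / 1)%g| = p.-1.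
Proof. by rewrite -galois_dim ?galL // dimv1 divn1 (dimL pr hzeta hL). Qed.

End GalS.
Lemma divn_divK (n a : nat) : (0 < n)%N -> (a %| n)%N -> (n %/ (n %/ a) = a)%N.
Proof.
move=> n0 an; have a0 : (0 < a)%N by apply: contraTT n0; rewrite -!eqn0Ngt => /eqP a0; move: an; rewrite a0 dvd0n.
have k0 : (0 < n %/ a)%N by rewrite divn_gt0 // dvdn_leq.
by apply/eqP; rewrite -(eqn_pmul2r k0) divnK ?dvdn_div // mulnC divnK.
Qed.

Section CR.
Local Open Scope group_scope.
Lemma card_roots_cyclic (gT : finGroupType) (G : {group gT}) (e : nat) :
  cyclic G -> (e %| #|G|)%N -> #|[set x in G | (x ^+ e == 1)%g]| = e.
Proof.
case/cyclicP=> s -> en.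
have n0 : (0 < #|<[s]>|)%N by rewrite cardG_gt0.
set n := #|<[s]>| in n0 en *.
have e0 : (0 < e)%N by apply: contraTT n0; rewrite -!eqn0Ngt => /eqP e0; move: en; rewrite e0 dvd0n.
set k := (n %/ e)%N.
have nke : n = (k * e)%N by rewrite divnK.
have ks : (k %| #[s])%N by rewrite /k dvdn_div.
suff -> : [set x in <[s]> | (x ^+ e == 1)%g] = <[s ^+ k]>.
  by rewrite -/#[_] orderXdiv // -/n /k divn_divK.
apply/setP => x; rewrite inE; apply/andP/idP.
  case=> /cycleP[i ->]; rewrite -expgM -order_dvdn (_ : #[s] = n) // nke dvdn_pmul2r // => /dvdnP[j ->].
  by rewrite mulnC expgM mem_cycle.
move=> xk; split; first by apply: subsetP xk; apply: cycleX.
case/cycleP: xk => j ->; rewrite -!expgM mulnCA -nke mulnC expgM.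
by rewrite (_ : n = #[s]) // expg_order expg1n.
Qed.
End CR.

Section Weil.
Variables (K : finFieldType) (p : nat) (L : fieldType) (zeta : L).
Hypotheses (hp : p \in [pchar K]) (hzeta : p.-primitive_root zeta).
Let pr : prime p := pcharf_prime hp.
Let p_gt0 : (0 < p)%N := prime_gt0 pr.
Local Notation Tr := (@absTrace K p).
Local Notation psi := (@psiK K p L zeta).
Local Notation nK := (logn p #|K|).

Lemma cardK : #|K| = (p ^ nK)%N.
Proof. exact: (card_pprimeChar hp). Qed.

Lemma nK_gt0 : (0 < nK)%N.
Proof. by rewrite -(ltn_exp2l _ _ (prime_gt1 pr)) -cardK expn0 finNzRing_gt1. Qed.

Lemma frobD i (x y : K) : (x + y) ^+ (p ^ i) = x ^+ (p ^ i) + y ^+ (p ^ i).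
Proof. by apply: exprDn_pchar; rewrite pnatX (pnatE _ pr) hp. Qed.

Lemma TrD x y : Tr (x + y) = Tr x + Tr y.
Proof. by rewrite /absTrace -big_split; apply: eq_bigr => i _; apply: frobD. Qed.

Lemma Tr0 : Tr 0 = 0.
Proof.
rewrite /absTrace big1 // => i _; rewrite expr0n.
by rewrite expn_eq0 (negbTE (lt0n_neq0 (prime_gt0 pr))) /=.
Qed.

Lemma TrMn x c : Tr (x *+ c) = Tr x *+ c.
Proof. by elim: c => [|c IH]; rewrite ?mulr0n ?Tr0 // !mulrS TrD IH. Qed.

Lemma Tr_p x : Tr x ^+ p = Tr x.
Proof.
rewrite /absTrace -(pFrobenius_autE hp) rmorph_sum /=.
under eq_bigr do rewrite pFrobenius_autE -exprM -expnSr.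
have n0 := nK_gt0.
rewrite -(prednK n0) [in LHS]big_ord_recr [in RHS]big_ord_recl /= prednK //.
by rewrite -cardK expf_card expn0 expr1 addrC.
Qed.

Lemma natr_inj_ord (t s : 'I_p) : (t%:R == s%:R :> K) = (t == s).
Proof. by rewrite (natr_eq_modP hp) !modn_small. Qed.

Lemma Fp_elem (y : K) : y ^+ p = y -> exists t : 'I_p, t%:R = y.
Proof.
move=> yp; have [t /eqP Ht|none] := pickP (fun t : 'I_p => t%:R == y); first by exists t.
exfalso.
pose rs := y :: [seq (val t)%:R | t <- enum 'I_p].
have sz : size ('X^p - 'X : {poly K}) = p.+1.
  by rewrite size_polyDl ?size_polyXn // size_polyN size_polyX ltnS prime_gt1.
have P0 : ('X^p - 'X : {poly K}) != 0 by rewrite -size_poly_eq0 sz.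
suff [H1 H2] : all (root ('X^p - 'X)) rs /\ uniq rs.
  by have := max_poly_roots P0 H1 H2; rewrite /= size_map size_enum_ord sz ltnn.
split.
  rewrite /= rootE !hornerE yp subrr eqxx /=; apply/allP => _ /mapP[t _ ->].
  by rewrite rootE !hornerE -(pFrobenius_autE hp) pFrobenius_aut_nat subrr.
rewrite /= map_inj_uniq ?enum_uniq ?andbT.
  by apply/mapP => -[t _ Et]; have := none t; rewrite Et eqxx.
by move=> t s /eqP; rewrite natr_inj_ord => /eqP.
Qed.

Lemma Fp_repP (y : K) : y ^+ p = y -> (Fp_rep p y)%:R = y.
Proof.
move=> yp; rewrite /Fp_rep; case: pickP => [t /eqP // | none].
by case: (Fp_elem yp) => t Ht; have := none t; rewrite Ht eqxx.
Qed.

Lemma Tr_rep x : (Fp_rep p (Tr x))%:R = Tr x.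
Proof. exact/Fp_repP/Tr_p. Qed.

Lemma psiE x (t : nat) : t%:R = Tr x -> psi x = zeta ^+ t.
Proof.
move=> Ht; rewrite /psiK; apply/eqP; rewrite (eq_prim_root_expr hzeta).
by rewrite -(natr_eq_modP hp) Tr_rep Ht.
Qed.

Lemma psiD x y : psi (x + y) = psi x * psi y.
Proof.
rewrite (@psiE _ (Fp_rep p (Tr x) + Fp_rep p (Tr y))) ?exprD //.
by rewrite natrD !Tr_rep TrD.
Qed.

Lemma psi0 : psi 0 = 1.
Proof. by rewrite (@psiE _ 0) ?Tr0. Qed.

Lemma psiMn y c : psi (y *+ c) = psi y ^+ c.
Proof.
rewrite (@psiE _ (Fp_rep p (Tr y) * c)) ?exprM //.
by rewrite natrM Tr_rep mulr_natr TrMn.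
Qed.

Lemma zeta_neq0 : zeta != 0.
Proof.
apply/eqP => z0; have := prim_expr_order hzeta; rewrite z0 expr0n.
by rewrite (negbTE (lt0n_neq0 (prime_gt0 pr))) => /eqP; rewrite eq_sym oner_eq0.
Qed.

Lemma psi_neq0 x : psi x != 0.
Proof. by rewrite /psiK expf_eq0 (negbTE zeta_neq0) andbF. Qed.

Lemma Tr_nz : exists z0 : K, Tr z0 != 0.
Proof.
have [z0 Hz|all0] := pickP (fun z => Tr z != 0); first by exists z0.
exfalso; have n0 := nK_gt0.
pose T : {poly K} := \sum_(i < nK) 'X^(p ^ i).
have Tx x : T.[x] = Tr x.
  by rewrite horner_sum; apply: eq_bigr => i _; rewrite hornerXn.
have T1 : T`_1 = 1.
  rewrite coef_sum -(prednK n0) big_ord_recl /= expn0 coefXn eqxx big1 ?addr0 //.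
  move=> i _; rewrite coefXn /= eq_sym gtn_eqF //.
  by rewrite -{1}(expn0 p) ltn_exp2l // prime_gt1.
have T0 : T != 0 by apply/eqP => T0; move: T1; rewrite T0 coef0 => /eqP; rewrite eq_sym oner_eq0.
have Hr : all (root T) (enum K).
  by apply/allP => x _; rewrite rootE Tx; have := all0 x; move/negbFE.
have := max_poly_roots T0 Hr (enum_uniq _).
rewrite -cardE cardK => /leq_trans h.
have : (size T <= (p ^ nK.-1).+1)%N.
  apply: leq_trans (size_sum _ _ _) _; apply/bigmax_leqP => i _.
  by rewrite size_polyXn ltnS leq_pexp2l // -ltnS prednK.
move/h; rewrite ltnS -{1}(prednK n0) expnS leqNgt => /negP; apply.
rewrite -[X in (X < _)%N]mul1n ltn_pmul2r ?expn_gt0 ?p_gt0 ?prime_gt1 //.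
Qed.

Lemma psi_nontriv : exists z0 : K, psi z0 != 1.
Proof.
have [z0 Hz] := Tr_nz; exists z0; apply: contra Hz.
rewrite /psiK -[X in _ == X](expr0 zeta) (eq_prim_root_expr hzeta).
by rewrite -(natr_eq_modP hp) Tr_rep mulr0n.
Qed.

Lemma psi_orth (u : K) :
  \sum_(b : K) psi (b * u) = if u == 0 then #|K|%:R else 0.
Proof.
case: eqP => [->|/eqP u0].
  by under eq_bigr do rewrite mulr0 psi0; rewrite sumr_const.
have [z0 Hz] := psi_nontriv.
set S := \sum_b _.
have : S = S * psi z0.
  rewrite {1}/S (reindex_inj (addIr (z0 / u))) mulr_suml; apply: eq_bigr => b _.
  by rewrite mulrDl divfK // psiD.
move/eqP; rewrite -subr_eq0 -{1}[S]mulr1 -mulrBr mulf_eq0 subr_eq0 [_ == psi _]eq_sym.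
by rewrite (negbTE Hz) orbF => /eqP <-.
Qed.

Lemma gal_psi (f : {rmorphism L -> L}) (c : nat) y :
  f zeta = zeta ^+ c -> f (psi y) = psi (y *+ c).
Proof.
by move=> Hf; rewrite psiMn /psiK rmorphXn Hf -!exprM mulnC.
Qed.

Lemma fourier (f h : K -> K) (w x0 : K) : injective h -> h x0 = w ->
  \sum_(a : K) (\sum_(x : K) psi (f x + a * h x)) * psi (- (a * w)) = #|K|%:R * psi (f x0).
Proof.
move=> hinj hx0.
have -> : \sum_(a : K) (\sum_(x : K) psi (f x + a * h x)) * psi (- (a * w)) =
          \sum_(x : K) psi (f x) * \sum_(a : K) psi (a * (h x - w)).
  under eq_bigr do rewrite mulr_suml.
  rewrite exchange_big /=; apply: eq_bigr => x _.
  rewrite mulr_sumr; apply: eq_bigr => a _.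
  by rewrite -!psiD mulrBr addrA.
rewrite (bigD1 x0) //= psi_orth hx0 subrr eqxx big1 ?addr0; first by rewrite mulrC.
move=> x xx0; rewrite psi_orth subr_eq0 -hx0 (inj_eq hinj) (negbTE xx0).
by rewrite mulr0.
Qed.
Variables (d : nat).
Hypotheses (hd : coprime d #|K|.-1) (d0 : (0 < d)%N) (hK0 : (#|K|%:R : L) != 0).

Lemma pow_inv : exists d', forall x : K, (x ^+ d) ^+ d' = x.
Proof.
case: (egcdnP #|K|.-1 d0) => km kn Hk _.
exists km => x; rewrite -exprM mulnC Hk (eqP hd).
have [->|x0] := eqVneq x 0; first by rewrite expr0n addn1.
have xq : x ^+ #|K|.-1 = 1.
  apply: (mulfI x0); rewrite mulr1 -exprS prednK ?expf_card //.
  exact: ltnW (finNzRing_gt1 K).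
by rewrite exprD expr1 mulnC exprM xq expr1n mul1r.
Qed.

Lemma W_fixed (c : nat) : (c%:R : K) != 0 ->
  (forall a : K, a != 0 -> \sum_(x : K) psi ((x ^+ d + a * x) *+ c) = WKd p d zeta a)
  <-> (c%:R : K) ^+ d = c%:R.
Proof.
move=> hc; rewrite /WKd; set g := (c%:R : K).
have mc y : y *+ c = g * y by rewrite mulr_natl.
have [d' dK] := pow_inv.
have injd : injective (fun x : K => x ^+ d) := @can_inj _ _ (fun x : K => x ^+ d) (fun x => x ^+ d') dK.
have dK' (x : K) : (x ^+ d') ^+ d = x by rewrite -exprM mulnC exprM dK.
split => [H | Hg a _]; last first.
  rewrite (reindex_inj (mulIf (invr_neq0 hc))) /=; apply: eq_bigr => x _.
  rewrite mc exprMn exprVn Hg (mulrA a x) -mulrDl mulrC divfK //.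
have Hall a : \sum_(x : K) psi (g * (x ^+ d + a * x)) = \sum_(x : K) psi (x ^+ d + a * x).
  case: (eqVneq a 0) => [->|/H]; last first.
    by move=> <-; apply: eq_bigr => x _; rewrite mc.
  have sum_pow (F : K -> L) : \sum_(x : K) F (x ^+ d) = \sum_(x : K) F x.
    by rewrite [RHS](reindex_inj injd).
  transitivity (\sum_(x : K) psi (x * g)).
    by rewrite -(sum_pow (fun x => psi (x * g))); apply: eq_bigr => x _; rewrite mul0r addr0 mulrC.
  transitivity (\sum_(x : K) psi (x * 1)).
    by rewrite !psi_orth oner_eq0 (negbTE hc).
  by rewrite -(sum_pow (fun x => psi (x * 1))); apply: eq_bigr => x _; rewrite mul0r addr0 mulr1.
have key t : psi (g * t ^+ d) = psi (g ^+ d * t ^+ d).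
  apply: (mulfI hK0).
  have F1 := fourier (fun x => g * x ^+ d) (h := fun x => g * x) (w := g * t) (x0 := t) (mulfI hc) erefl.
  have F2 := fourier (fun x => x ^+ d) (h := id) (w := g * t) (x0 := g * t) (@inj_id _) erefl.
  rewrite /= exprMn in F1 F2; rewrite -F1 -F2.
  apply: eq_bigr => a _; congr (_ * _); rewrite -Hall; apply: eq_bigr => x _.
  by rewrite mulrDr mulrCA.
case: (eqVneq (g ^+ d) g) => // ngd; exfalso.
have ngd0 : g - g ^+ d != 0 by rewrite subr_eq0 eq_sym.
have [z0 Hz] := psi_nontriv.
have := key ((z0 / (g - g ^+ d)) ^+ d'); rewrite dK' => E.
have : psi ((g - g ^+ d) * (z0 / (g - g ^+ d))) = 1.
  apply: (mulIf (psi_neq0 (g ^+ d * (z0 / (g - g ^+ d))))).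
  by rewrite mul1r -psiD -mulrDl subrK.
by rewrite mulrC divfK // => /eqP; apply/negP.
Qed.
End Weil.

Lemma arith (n d m : nat) : (0 < n)%N -> (0 < d)%N -> (m %| n)%N ->
  d = 1 %[mod n %/ m] ->
  (forall m', (0 < m')%N -> (m' %| n)%N -> d = 1 %[mod n %/ m'] -> (m <= m')%N) ->
  (n %/ gcdn d.-1 n = m)%N.
Proof.
move=> n0 d0 mn mc mmin; set e := gcdn d.-1 n.
have e0 : (0 < e)%N by rewrite gcdn_gt0 n0 orbT.
have en : (e %| n)%N by apply: dvdn_gcdr.
have m0 : (0 < m)%N.
  by apply: contraTT n0; rewrite -!eqn0Ngt => /eqP m0; move: mn; rewrite m0 dvd0n.
have dmod k : (0 < k)%N -> (d == 1 %[mod k]) = (k %| d.-1)%N.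
  by move=> k0; rewrite eqn_mod_dvd // subn1.
apply/eqP; rewrite eqn_leq; apply/andP; split; last first.
  apply: mmin; first by rewrite divn_gt0 // dvdn_leq.
    exact: dvdn_div.
  apply/eqP; rewrite divn_divK // dmod //; exact: dvdn_gcdl.
have k0 : (0 < n %/ m)%N by rewrite divn_gt0 // dvdn_leq.
have ke : (n %/ m %| e)%N.
  by rewrite dvdn_gcd -dmod ?mc ?eqxx //= dvdn_div.
rewrite -(divn_divK n0 mn); apply: leq_div2l => //; exact: dvdn_leq.
Qed.

Lemma main_S (K : finFieldType) (p : nat) (hp : p \in [pchar K])
  (d : nat) (hd : coprime d #|K|.-1) (d0 : (0 < d)%N)
  (m : nat) (m_gt0 : (0 < m)%N) (m_dvd : (m %| p.-1)%N)
  (m_cong : d = 1 %[mod p.-1 %/ m])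
  (m_min : forall m' : nat, (0 < m')%N -> (m' %| p.-1)%N ->
             d = 1 %[mod p.-1 %/ m'] -> (m <= m')%N)
  (S : splittingFieldType rat) (zeta : S) (hzeta : p.-primitive_root zeta)
  (hL : <<1; zeta>>%VS = fullv) :
  let E : {subfield S} := <<1 & Wvalues K p d zeta>>%AS in
  \dim E = m /\ (forall F : {subfield S}, \dim F = m -> F = E).
Proof.
move=> E.
have pr := pcharf_prime hp.
set n := p.-1.
have n0 : (0 < n)%N by rewrite /n -ltnS prednK ?prime_gt0 ?prime_gt1.
have cycG : cyclic 'Gal({:S} / 1)%g := galG_cyclic pr hzeta hL.
have cardG : #|'Gal({:S} / 1)%g| = n := card_galG pr hzeta hL.
set e := gcdn d.-1 n.
have en : (e %| n)%N := dvdn_gcdr _ _.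
have e0 : (0 < e)%N by rewrite gcdn_gt0 n0 orbT.
have hK0 : (#|K|%:R : S) != 0.
  by rewrite (cardK hp) natrX expf_eq0 (negbTE (natr_p_neq0 S pr)) andbF.
have step (x : gal_of {:S}) : (E <= fixedField [set x])%VS = (x ^+ e == 1)%g.
  have P1 : (E <= fixedField [set x])%VS <->
            (forall a : K, a != 0 -> x (WKd p d zeta a) = WKd p d zeta a).
    split => [sE a a0 | H].
      have : WKd p d zeta a \in E.
        apply: seqv_sub_adjoin; apply/mapP; exists a => //.
        by rewrite mem_filter a0 mem_enum.
      by move/(subvP sE)/mem_fixedFieldP => [_ /(_ x (set11 x))].
    apply/Fadjoin_seqP; split; first exact: sub1v.
    move=> v /mapP[a]; rewrite mem_filter => /andP[a0 _] ->.
    apply/fixedFieldP; first exact: memvf.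
    by move=> y /set1P ->; apply: H.
  set c := gexp p zeta x.
  have xz : x zeta = zeta ^+ c := gexpP hzeta x.
  have hc : (c%:R : K) != 0.
    apply/negP; rewrite -(mulr0n 1) (natr_eq_modP hp) => /eqP cp.
    have : x zeta = x 1 by rewrite xz rmorph1 -(prim_expr_mod hzeta) cp mod0n expr0.
    by move/fmorph_inj/eqP; rewrite (negbTE (zeta_neq1 pr hzeta)).
  have P2 : (forall a : K, a != 0 -> x (WKd p d zeta a) = WKd p d zeta a) <->
            (c%:R : K) ^+ d = c%:R.
    have WF := W_fixed hp hzeta hd d0 hK0 hc.
    have xW a : x (WKd p d zeta a) = \sum_(y : K) psiK p zeta ((y ^+ d + a * y) *+ c).
      rewrite /WKd rmorph_sum; apply: eq_bigr => y _.
      exact: (gal_psi hp hzeta _ xz).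
    split => H.
      by apply/WF => a /H; rewrite xW.
    by move=> a /(proj2 WF H); rewrite xW.
  apply/idP/idP.
    move/P1/P2/eqP; rewrite -natrX (natr_eq_modP hp) -{2}(expn1 c) -(gal_eqX hzeta hL x d 1).
    rewrite expg1 -{1}(prednK d0) expgSr.
    have -> : (((x ^+ d.-1) * x == x)%g = (x ^+ d.-1 == 1)%g).
      apply/eqP/eqP => [|->]; last by rewrite mul1g.
      by move/(congr1 (fun z => (z * x^-1)%g)); rewrite mulgK mulgV.
    rewrite -!order_dvdn => od; rewrite dvdn_gcd od /=.
    by rewrite -cardG order_dvdG // galS_all.
  move=> xe; apply/P1/P2/eqP; rewrite -natrX (natr_eq_modP hp) -{2}(expn1 c).
  rewrite -(gal_eqX hzeta hL x d 1) expg1 -{1}(prednK d0) expgSr.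
  move: xe; rewrite -order_dvdn dvdn_gcd => /andP[od _].
  by move: od; rewrite order_dvdn => /eqP ->; rewrite mul1g.
have HE : 'Gal({:S} / E)%g = [set x in 'Gal({:S} / 1)%g | (x ^+ e == 1)%g].
  apply/setP => x; rewrite inE galS_all /= -sub1set galois_connection ?subvf //.
have cardH : #|'Gal({:S} / E)%g| = e by rewrite HE card_roots_cyclic // cardG.
have dL : \dim {:S} = n := dimL pr hzeta hL.
have galE (F : {subfield S}) : galois F {:S}.
  by apply: (galoisS _ (galL pr hzeta hL)); rewrite sub1v subvf.
have dimF (F : {subfield S}) : \dim F = (n %/ #|'Gal({:S} / F)%g|)%N.
  rewrite -galois_dim ?galE // dL divn_divK //.
  by rewrite -dL; apply: field_dimS; apply: subvf.
have dE : \dim E = m.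
  by rewrite dimF cardH /e (arith n0 d0 m_dvd m_cong m_min).
split => // F dFm.
have cardF : #|'Gal({:S} / F)%g| = e.
  have h := galois_dim (galE F); rewrite dL dFm in h.
  by rewrite -h -(arith n0 d0 m_dvd m_cong m_min) divn_divK.
have GFE : 'Gal({:S} / F)%g = 'Gal({:S} / E)%g.
  apply/eqP; rewrite (eq_subG_cyclic cycG) ?cardF ?cardH //; apply: galS; exact: sub1v.
apply: val_inj => /=.
have /galois_fixedField fF := galE F.
have /galois_fixedField fE := galE E.
by rewrite -fF GFE fE.
Qed.

Definition LS (L : fieldExtType rat) (p : nat) (zeta : L) (pr : prime p)
  (hzeta : p.-primitive_root zeta) (hL : <<1; zeta>>%VS = fullv) : splittingFieldType rat :=
  HB.pack L (FieldExt_isSplittingField.Build rat L (splitL pr hzeta hL)).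

Unset Implicit Arguments.

Theorem lemma5p3 (K : finFieldType) (p : nat) (hp : p \in [pchar K])
  (d : nat) (hd : coprime d #|K|.-1)
  (m : nat) (m_gt0 : (0 < m)%N) (m_dvd : (m %| p.-1)%N)
  (m_cong : d = 1 %[mod p.-1 %/ m])
  (m_min : forall m' : nat, (0 < m')%N -> (m' %| p.-1)%N ->
             d = 1 %[mod p.-1 %/ m'] -> (m <= m')%N)
  (L : fieldExtType rat) (zeta : L) (hzeta : p.-primitive_root zeta)
  (hL : <<1; zeta>>%VS = fullv) :
  let E : {subfield L} := <<1 & Wvalues K p d zeta>>%AS in
  \dim E = m /\
  (forall F : {subfield L}, \dim F = m -> F = E).
Proof.
have pr := pcharf_prime hp.
case: (posnP d) => [d0|d0]; last first.
  exact: (@main_S K p hp d hd d0 m m_gt0 m_dvd m_cong m_min (LS pr hzeta hL) zeta hzeta hL).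
move=> E; subst d.
have q2 : #|K| = 2%N.
  move: hd; rewrite /coprime gcd0n => /eqP h.
  by rewrite -(prednK (ltnW (finNzRing_gt1 K))) h.
have p2 : p = 2%N.
  apply/eqP; rewrite eqn_leq prime_gt1 // andbT -q2 (cardK hp).
  by rewrite -{1}(expn1 p); apply: leq_pexp2l; [exact: prime_gt0 | exact: (nK_gt0 hp)].
have dL : \dim {:L} = 1%N by rewrite (dimL pr hzeta hL) p2.
have m1 : m = 1%N by move: m_dvd; rewrite p2 dvdn1 => /eqP.
have one (F : {subfield L}) : \dim F = 1%N -> (F : {vspace L}) = 1%VS.
  by move=> dF; apply/eqP; rewrite eq_sym eqEdim sub1v dimv1 dF.
have dE : \dim E = 1%N.
  apply/eqP; rewrite eqn_leq adim_gt0 andbT -dL; apply: dimvS; exact: subvf.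
split; first by rewrite dE m1.
move=> F; rewrite m1 => dF; apply: val_inj => /=.
by rewrite (one F dF) (one E dE).
Qed.
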